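(* Let $\Gamma\{-\}$ be a unary context and $A$ a formula. If both $\Gamma\{A\}$ and $\Gamma\{A^\perp\}$ are cut-free provable, then $\Gamma\{\}$ is cut-free provable.
   Context: Fix a countable set of atoms; each atom $\alpha$ has a dual negative atom $\alpha^\perp$. Formulas: $A,B ::= \alpha \mid \alpha^\perp \mid A\land B \mid A\lor B \mid \Box A \mid \Diamond A$. Negation $A^\perp$: $(\alpha)^\perp=\alpha^\perp$, $(\alpha^\perp)^\perp=\alpha$, $(A\land B)^\perp=A^\perp\lor B^\perp$, $(A\lor B)^\perp=A^\perp\land B^\perp$, $(\Box A)^\perp=\Diamond A^\perp$, $(\Diamond A)^\perp=\Box A^\perp$. A (nested) sequent is given by $\Gamma,\Delta ::= \cdot \mid \Gamma, A \mid \Gamma, [\Delta]$, where $\cdot$ is the empty sequent; sequents are taken up to exchange, and $\Gamma,\Delta$ denotes juxtaposition. A unary context is given by $\Gamma\{-\} ::= \Delta,\{-\} \mid \Delta,[\Gamma\{-\}]$; $\Gamma\{\Delta\}$ is the result of filling the hole with $\Delta$, and $\Gamma\{\}$ means $\Gamma\{\cdot\}$. Depth: $\mathrm{depth}(\Delta,\{-\})=0$, $\mathrm{depth}(\Delta,[\Gamma\{-\}])=\mathrm{depth}(\Gamma\{-\})+1$. Rules: (id) $\Gamma\{\alpha^\perp,\alpha\}$ with no premises ($\alpha$ an atom); ($\land$) from $\Gamma\{A\}$ and $\Gamma\{B\}$ infer $\Gamma\{A\land B\}$; ($\lor$) from $\Gamma\{A,B\}$ infer $\Gamma\{A\lor B\}$;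 ($\Box$) from $\Gamma\{[\Diamond A^\perp, A]\}$ infer $\Gamma\{\Box A\}$; ($\Diamond$) from $\Gamma\{\Delta\{A\},\Diamond A\}$ infer $\Gamma\{\Delta\{\},\Diamond A\}$, provided $\mathrm{depth}(\Delta\{-\})>0$. Cut-free provable = derivable using these rules. *)

(* Defs.v *)
From Stdlib Require Import List.
Import ListNotations.

Inductive form : Type :=
| Atom : nat -> form
| NAtom : nat -> form
| And : form -> form -> form
| Or : form -> form -> form
| Box : form -> form
| Dia : form -> form.

Fixpoint neg (A : form) : form :=
  match A with
  | Atom a => NAtom a
  | NAtom a => Atom a
  | And A B => Or (neg A) (neg B)
  | Or A B => And (neg A) (neg B)
  | Box A => Dia (neg A)
  | Dia A => Box (neg A)
  end.

Inductive item : Type :=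
| IF : form -> item
| IB : list item -> item.

Definition sequent := list item.

(* Unary contexts: Delta,{-}  |  Delta,[Gamma{-}] *)
Inductive ctx : Type :=
| Hole : sequent -> ctx
| Nest : sequent -> ctx -> ctx.

Fixpoint fill (G : ctx) (X : sequent) : sequent :=
  match G with
  | Hole D => D ++ X
  | Nest D G' => D ++ [IB (fill G' X)]
  end.

Fixpoint depth (G : ctx) : nat :=
  match G with
  | Hole _ => 0
  | Nest _ G' => S (depth G')
  end.

(* Sequents are taken up to exchange, at every nesting level. *)
Inductive seq_eq : sequent -> sequent -> Prop :=
| se_refl l : seq_eq l l
| se_cons x y l l' : item_eq x y -> seq_eq l l' -> seq_eq (x :: l) (y :: l')
| se_swap x y l : seq_eq (x :: y :: l) (y :: x :: l)
| se_trans l1 l2 l3 : seq_eq l1 l2 -> seq_eq l2 l3 -> seq_eq l1 l3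
with item_eq : item -> item -> Prop :=
| ie_F A : item_eq (IF A) (IF A)
| ie_B G G' : seq_eq G G' -> item_eq (IB G) (IB G').

Inductive provable : sequent -> Prop :=
| p_exch G G' : seq_eq G G' -> provable G -> provable G'
| p_id (C : ctx) (a : nat) :
    provable (fill C [IF (NAtom a); IF (Atom a)])
| p_and (C : ctx) (A B : form) :
    provable (fill C [IF A]) -> provable (fill C [IF B]) ->
    provable (fill C [IF (And A B)])
| p_or (C : ctx) (A B : form) :
    provable (fill C [IF A; IF B]) -> provable (fill C [IF (Or A B)])
| p_box (C : ctx) (A : form) :
    provable (fill C [IB [IF (Dia (neg A)); IF A]]) ->
    provable (fill C [IF (Box A)])
| p_dia (C D : ctx) (A : form) :
    0 < depth D ->
    provable (fill C (fill D [IF A] ++ [IF (Dia A)])) ->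
    provable (fill C (fill D [] ++ [IF (Dia A)])).

(* Main.v *)
Require Import Defs.
From Stdlib Require Import List Permutation Classical Lia Wellfounded Relations.
Import ListNotations.

Scheme seq_eq_mut := Induction for seq_eq Sort Prop
 with item_eq_mut := Induction for item_eq Sort Prop.

Lemma item_eq_refl x : item_eq x x.
Proof. destruct x; constructor. apply se_refl. Qed.

Lemma seq_eq_sym_all : (forall l l', seq_eq l l' -> seq_eq l' l) /\ (forall x y, item_eq x y -> item_eq y x).
Proof.
  split.
  - apply (seq_eq_mut (fun l l' _ => seq_eq l' l) (fun x y _ => item_eq y x)).
    + intros; apply se_refl.
    + intros; apply se_cons; auto.
    + intros; apply se_swap.
    + intros; eapply se_trans; eauto.
    + intros; apply ie_F.
    + intros; apply ie_B; auto.
  - apply (item_eq_mut (fun l l' _ => seq_eq l' l) (fun x y _ => item_eq y x)).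
    + intros; apply se_refl.
    + intros; apply se_cons; auto.
    + intros; apply se_swap.
    + intros; eapply se_trans; eauto.
    + intros; apply ie_F.
    + intros; apply ie_B; auto.
Qed.

Lemma seq_eq_sym l l' : seq_eq l l' -> seq_eq l' l.
Proof. apply seq_eq_sym_all. Qed.

Lemma perm_seq_eq l l' : Permutation l l' -> seq_eq l l'.
Proof.
  induction 1.
  - apply se_refl.
  - apply se_cons; auto. apply item_eq_refl.
  - apply se_swap.
  - eapply se_trans; eauto.
Qed.

Lemma seq_eq_app_l l l3 l4 : seq_eq l3 l4 -> seq_eq (l ++ l3) (l ++ l4).
Proof. intros H; induction l; simpl; auto. apply se_cons; auto. apply item_eq_refl. Qed.

Lemma seq_eq_app_r l1 l2 l : seq_eq l1 l2 -> seq_eq (l1 ++ l) (l2 ++ l).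
Proof.
  induction 1; simpl.
  - apply se_refl.
  - apply se_cons; auto.
  - apply se_swap.
  - eapply se_trans; eauto.
Qed.

Lemma seq_eq_app l1 l2 l3 l4 : seq_eq l1 l2 -> seq_eq l3 l4 -> seq_eq (l1 ++ l3) (l2 ++ l4).
Proof. intros; eapply se_trans. apply seq_eq_app_r; eauto. apply seq_eq_app_l; auto. Qed.

Lemma fill_cong C X Y : seq_eq X Y -> seq_eq (fill C X) (fill C Y).
Proof.
  intros H; induction C; simpl.
  - apply seq_eq_app_l; auto.
  - apply seq_eq_app_l. apply se_cons. apply ie_B; auto. apply se_refl.
Qed.

Lemma prov_eq X Y : seq_eq X Y -> provable X -> provable Y.
Proof. intros; eapply p_exch; eauto. Qed.

Lemma prov_perm C X Y : Permutation X Y -> provable (fill C X) -> provable (fill C Y).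
Proof. intros; eapply prov_eq; [|eauto]. apply fill_cong, perm_seq_eq; auto. Qed.

Fixpoint comp (C1 C2 : ctx) : ctx :=
  match C1 with
  | Hole D => match C2 with Hole D' => Hole (D ++ D') | Nest D' G => Nest (D ++ D') G end
  | Nest D G => Nest D (comp G C2)
  end.

Lemma fill_comp C1 C2 X : fill (comp C1 C2) X = fill C1 (fill C2 X).
Proof.
  induction C1; simpl.
  - destruct C2; simpl; rewrite app_assoc; auto.
  - rewrite IHC1; auto.
Qed.

Lemma comp_assoc A B C : comp (comp A B) C = comp A (comp B C).
Proof.
  induction A; simpl.
  - destruct B; simpl; destruct C; simpl; try rewrite app_assoc; auto.
  - rewrite IHA; auto.
Qed.

Fixpoint ctx_app (C : ctx) (X : sequent) : ctx :=
  match C with Hole D => Hole (D ++ X) | Nest D G => Nest D (ctx_app G X) end.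

Lemma fill_ctx_app C X Y : fill (ctx_app C X) Y = fill C (X ++ Y).
Proof. induction C; simpl. rewrite app_assoc; auto. rewrite IHC; auto. Qed.

Lemma fill_hole_comp C L X : fill (comp C (Hole L)) X = fill C (L ++ X).
Proof. rewrite fill_comp; reflexivity. Qed.

Lemma neg_inv A : neg (neg A) = A.
Proof. induction A; simpl; congruence. Qed.

Ltac pull_el h r :=
  match r with
  | h :: ?t => apply Permutation_refl
  | ?x :: ?t => eapply perm_trans; [apply perm_skip; pull_el h t | apply perm_swap]
  | ?L ++ ?t => eapply perm_trans; [apply Permutation_app_head; pull_el h t | apply Permutation_sym, Permutation_middle]
  end.

Ltac pull_ls L r :=
  match r with
  | L ++ ?t => apply Permutation_refl
  | L => rewrite <- (app_nil_r L) at 1; apply Permutation_refl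
  | ?x :: ?t => eapply perm_trans; [apply perm_skip; pull_ls L t | apply Permutation_middle]
  | ?M ++ ?t => eapply perm_trans; [apply Permutation_app_head; pull_ls L t | apply Permutation_app_swap_app]
  end.

Ltac psolve0 :=
  match goal with
  | |- Permutation ?l ?l => apply Permutation_refl
  | |- Permutation [] ?r => apply Permutation_refl
  | |- Permutation (?h :: ?t) ?r =>
      apply Permutation_sym; eapply perm_trans; [pull_el h r|]; apply perm_skip; apply Permutation_sym; psolve0
  | |- Permutation (?L ++ ?t) ?r =>
      apply Permutation_sym; eapply perm_trans; [pull_ls L r|]; apply Permutation_app_head; apply Permutation_sym; psolve0
  | |- Permutation ?L ?r =>
      apply Permutation_sym; eapply perm_trans; [pull_ls L r|]; rewrite <- (app_nil_r L) at 2; apply Permutation_app_head; apply Permutation_sym; psolve0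
  end.

Ltac psolve := simpl; repeat rewrite <- ?app_assoc, <- ?app_comm_cons; simpl; psolve0.

Lemma r_and C X A B : provable (fill C (IF A :: X)) -> provable (fill C (IF B :: X)) ->
  provable (fill C (IF (And A B) :: X)).
Proof.
  intros H1 H2. apply prov_perm with (X := X ++ [IF (And A B)]). psolve.
  rewrite <- fill_ctx_app. apply p_and; rewrite fill_ctx_app; [eapply prov_perm; [|exact H1]; psolve | eapply prov_perm; [|exact H2]; psolve].
Qed.

Lemma r_or C X A B : provable (fill C (IF A :: IF B :: X)) -> provable (fill C (IF (Or A B) :: X)).
Proof.
  intros H1. apply prov_perm with (X := X ++ [IF (Or A B)]). psolve.
  rewrite <- fill_ctx_app. apply p_or; rewrite fill_ctx_app; eapply prov_perm; [|exact H1]; psolve.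
Qed.

Lemma r_box C X A : provable (fill C (IB [IF (Dia (neg A)); IF A] :: X)) -> provable (fill C (IF (Box A) :: X)).
Proof.
  intros H1. apply prov_perm with (X := X ++ [IF (Box A)]). psolve.
  rewrite <- fill_ctx_app. apply p_box; rewrite fill_ctx_app; eapply prov_perm; [|exact H1]; psolve.
Qed.

Lemma r_id C X a : provable (fill C (IF (NAtom a) :: IF (Atom a) :: X)).
Proof.
  apply prov_perm with (X := X ++ [IF (NAtom a); IF (Atom a)]). psolve.
  rewrite <- fill_ctx_app. apply p_id.
Qed.

Lemma r_dia C X D A : provable (fill C (IF (Dia A) :: IB (fill D [IF A]) :: X)) ->
  provable (fill C (IF (Dia A) :: IB (fill D []) :: X)).
Proof.
  intros H. apply prov_perm with (X := X ++ (fill (Nest [] D) [] ++ [IF (Dia A)])). simpl; psolve.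
  rewrite <- fill_ctx_app. apply p_dia. simpl; lia.
  rewrite fill_ctx_app; eapply prov_perm; [|exact H]; simpl; psolve.
Qed.

Lemma prov_box_perm C L P P' : Permutation P P' -> provable (fill C (L ++ [IB P])) -> provable (fill C (L ++ [IB P'])).
Proof.
  intros Hp H. assert (E : forall Q, fill C (L ++ [IB Q]) = fill (comp C (Nest L (Hole []))) Q).
  { intros Q; rewrite fill_comp; reflexivity. }
  rewrite E in *. eapply prov_perm; eauto.
Qed.

Lemma gen_id A : forall C X, provable (fill C (IF A :: IF (neg A) :: X)).
Proof.
  induction A; intros C X; simpl.
  - eapply prov_perm; [|apply (r_id C X n)]. psolve.
  - apply r_id.
  - apply r_and.
    + eapply prov_perm with (X := IF (Or (neg A1) (neg A2)) :: IF A1 :: X). psolve.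
      apply r_or. eapply prov_perm; [| apply (IHA1 C (IF (neg A2) :: X))]. psolve.
    + eapply prov_perm with (X := IF (Or (neg A1) (neg A2)) :: IF A2 :: X). psolve.
      apply r_or. eapply prov_perm; [| apply (IHA2 C (IF (neg A1) :: X))]. psolve.
  - apply r_or.
    eapply prov_perm with (X := IF (And (neg A1) (neg A2)) :: IF A1 :: IF A2 :: X). psolve.
    apply r_and.
    + eapply prov_perm; [| apply (IHA1 C (IF A2 :: X))]. psolve.
    + eapply prov_perm; [| apply (IHA2 C (IF A1 :: X))]. psolve.
  - eapply prov_perm with (X := IF (Box A) :: IF (Dia (neg A)) :: X). psolve.
    apply r_box.
    eapply prov_perm with (X := IF (Dia (neg A)) :: IB (fill (Hole [IF (Dia (neg A)); IF A]) []) :: X). simpl; psolve.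
    apply r_dia. simpl.
    pose proof (IHA (comp C (Nest (IF (Dia (neg A)) :: X) (Hole [IF (Dia (neg A))]))) []) as H.
    rewrite fill_comp in H; simpl in H. eapply prov_perm; [|exact H]; psolve.
  - eapply prov_perm with (X := IF (Box (neg A)) :: IF (Dia A) :: X). psolve.
    apply r_box. rewrite neg_inv.
    eapply prov_perm with (X := IF (Dia A) :: IB (fill (Hole [IF (Dia A); IF (neg A)]) []) :: X). simpl; psolve.
    apply r_dia. simpl.
    pose proof (IHA (comp C (Nest (IF (Dia A) :: X) (Hole [IF (Dia A)]))) []) as H.
    rewrite fill_comp in H; simpl in H.
    apply prov_perm with (X := (IF (Dia A) :: X) ++ [IB [IF (Dia A); IF (neg A); IF A]]). psolve.
    eapply prov_box_perm; [|exact H]. psolve.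
Qed.

Lemma prov_nest_perm S1 M S2 Y Y' : Permutation Y Y' ->
  provable (fill S1 (M ++ [IB (fill S2 Y)])) -> provable (fill S1 (M ++ [IB (fill S2 Y')])).
Proof.
  intros Hp H. assert (E : forall Q, fill S1 (M ++ [IB (fill S2 Q)]) = fill (comp S1 (Nest M S2)) Q).
  { intros Q; rewrite fill_comp; reflexivity. }
  rewrite E in *. eapply prov_perm; eauto.
Qed.

Definition DA (S : ctx) (A : form) := exists S1 L S2, S = comp S1 (Nest L S2) /\ In (IF (Dia A)) L.

Lemma DA_add S A X : DA S A -> provable (fill S (IF A :: X)) -> provable (fill S X).
Proof.
  intros [S1 [L [S2 [-> HL]]]] H. rewrite fill_comp in *. simpl in *.
  apply in_split in HL. destruct HL as [l1 [l2 ->]].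
  apply prov_perm with (X := IF (Dia A) :: IB (fill (ctx_app S2 X) []) :: l1 ++ l2).
  rewrite fill_ctx_app, app_nil_r. psolve.
  apply r_dia. rewrite fill_ctx_app.
  apply prov_perm with (X := (l1 ++ IF (Dia A) :: l2) ++ [IB (fill S2 (X ++ [IF A]))]). psolve.
  eapply prov_nest_perm; [|exact H]. psolve.
Qed.

Lemma DA_ext S A Q : DA S A -> DA (comp S Q) A.
Proof.
  intros [S1 [L [S2 [-> HL]]]]. exists S1, L, (comp S2 Q). split; auto.
  rewrite comp_assoc. reflexivity.
Qed.

Lemma DA_here S L A : In (IF (Dia A)) L -> DA (comp S (Nest L (Hole []))) A.
Proof. intros; exists S, L, (Hole []); auto. Qed.

Lemma DA_addl S D X : (forall A, In A D -> DA S A) -> provable (fill S (map IF D ++ X)) -> provable (fill S X).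
Proof.
  induction D; simpl; intros HD H; auto.
  apply IHD; auto. eapply DA_add; eauto.
Qed.

Lemma blocked_prov S A X : DA S (neg A) -> provable (fill S (IF (Dia (neg A)) :: IF A :: X)).
Proof.
  intros HD. eapply DA_add; eauto.
  eapply prov_perm; [|apply (gen_id A S (IF (Dia (neg A)) :: X))]. psolve.
Qed.

Definition child (w v : sequent) : Prop := In (IB v) w.
Definition R := clos_trans sequent child.
Definition RT := clos_refl_trans sequent child.

Fixpoint isize (i : item) : nat :=
  match i with
  | IF _ => 1
  | IB l => S ((fix ls (l : list item) : nat := match l with [] => 0 | j :: l' => isize j + ls l' end) l)
  end.
Definition ssize : list item -> nat := fix ls (l : list item) : nat := match l with [] => 0 | j :: l' => isize j + ls l' end.

Lemma child_size w v : child w v -> ssize v < ssize w.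
Proof.
  unfold child. induction w; simpl; intros H. contradiction.
  destruct H as [->|H]. simpl. fold ssize. lia. specialize (IHw H). lia.
Qed.

Lemma R_size w v : R w v -> ssize v < ssize w.
Proof. induction 1. apply child_size; auto. lia. Qed.

Lemma R_wf : well_founded (fun v w => R w v).
Proof.
  apply (wf_incl _ _ (fun v w => ssize v < ssize w)).
  intros x y H; apply R_size; auto.
  apply (wf_inverse_image _ _ _ ssize). apply Wf_nat.lt_wf.
Qed.

Lemma R_trans a b c : R a b -> R b c -> R a c.
Proof. intros; eapply t_trans; eauto. Qed.

Lemma R_child a b : child a b -> R a b.
Proof. intros; apply t_step; auto. Qed.

Lemma R_first a c : R a c -> exists b, child a b /\ RT b c.
Proof.
  intros H. apply clos_trans_t1n in H. destruct H.
  exists y; split; auto. apply rt_refl.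
  exists y; split; auto. apply clos_t1n_trans in H0. apply clos_t_clos_rt; auto.
Qed.

Lemma RT_cases a b : RT a b -> a = b \/ R a b.
Proof.
  intros H. apply clos_rt_rt1n in H. induction H; auto. right.
  destruct IHclos_refl_trans_1n as [<-|H1]. apply t_step; auto. eapply t_trans; [apply t_step; eauto| auto].
Qed.

Fixpoint forces (w : sequent) (A : form) : Prop :=
  match A with
  | Atom a => In (IF (NAtom a)) w
  | NAtom a => ~ In (IF (NAtom a)) w
  | And A B => forces w A /\ forces w B
  | Or A B => forces w A \/ forces w B
  | Box A => forall v, R w v -> forces v A
  | Dia A => exists v, R w v /\ forces v A
  end.

Lemma forces_neg A : forall w, forces w (neg A) <-> ~ forces w A.
Proof.
  induction A; intros w; simpl.
  - tauto.
  - split; intros H; auto. apply NNPP; auto.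
  - rewrite IHA1, IHA2. tauto.
  - rewrite IHA1, IHA2. tauto.
  - split. intros [v [Hv H]] H'. apply IHA in H; auto.
    intros H. apply NNPP. intros H'. apply H. intros v Hv. apply NNPP. intros Hn.
    apply H'. exists v; split; auto. apply IHA; auto.
  - split. intros H [v [Hv H']]. specialize (H v Hv). apply IHA in H; auto.
    intros H v Hv. apply IHA. intros H'. apply H. eauto.
Qed.

Fixpoint falsI (w : sequent) (i : item) {struct i} : Prop :=
  match i with
  | IF A => ~ forces w A
  | IB V => exists v, R w v /\ (fix fl (l : list item) : Prop := match l with [] => True | j :: l' => falsI v j /\ fl l' end) V
  end.
Definition falsS (w : sequent) : list item -> Prop :=
  fix fl (l : list item) : Prop := match l with [] => True | j :: l' => falsI w j /\ fl l' end.

Lemma falsI_IB w V : falsI w (IB V) <-> exists v, R w v /\ falsS v V.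
Proof. reflexivity. Qed.

Lemma falsS_cons w x l : falsS w (x :: l) <-> falsI w x /\ falsS w l.
Proof. reflexivity. Qed.

Lemma falsS_app w l1 l2 : falsS w (l1 ++ l2) <-> falsS w l1 /\ falsS w l2.
Proof. induction l1; simpl. tauto. rewrite IHl1. tauto. Qed.

Lemma falsS_In w l : falsS w l <-> forall x, In x l -> falsI w x.
Proof.
  induction l; simpl. tauto. rewrite IHl. split.
  intros [H1 H2] x [<-|H]; auto. intros H; split; auto.
Qed.

Lemma seq_eq_fals_all :
  (forall l l', seq_eq l l' -> forall w, falsS w l <-> falsS w l') /\
  (forall x y, item_eq x y -> forall w, falsI w x <-> falsI w y).
Proof.
  split.
  - apply (seq_eq_mut (fun l l' _ => forall w, falsS w l <-> falsS w l') (fun x y _ => forall w, falsI w x <-> falsI w y)).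
    + tauto.
    + intros. simpl. rewrite H, H0. tauto.
    + intros; simpl; tauto.
    + intros. rewrite H, H0; tauto.
    + tauto.
    + intros G G' _ H w. split; intros [v [Hv Hf]]; exists v; split; auto; apply (H v); auto.
  - apply (item_eq_mut (fun l l' _ => forall w, falsS w l <-> falsS w l') (fun x y _ => forall w, falsI w x <-> falsI w y)).
    + tauto.
    + intros. simpl. rewrite H, H0. tauto.
    + intros; simpl; tauto.
    + intros. rewrite H, H0; tauto.
    + tauto.
    + intros G G' _ H w. split; intros [v [Hv Hf]]; exists v; split; auto; apply (H v); auto.
Qed.

Fixpoint falsC (w : sequent) (C : ctx) (v : sequent) : Prop :=
  match C with
  | Hole D => falsS w D /\ v = w
  | Nest D G => falsS w D /\ exists u, R w u /\ falsC u G v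
  end.

Lemma falsS_fill C : forall w X, falsS w (fill C X) <-> exists v, falsC w C v /\ falsS v X.
Proof.
  induction C; intros w X; simpl.
  - rewrite falsS_app. split. intros [H1 H2]; eauto. intros [v [[H1 ->] H2]]; auto.
  - rewrite falsS_app. simpl. split.
    intros [H1 [[u [Hu H]] _]]. apply IHC in H. destruct H as [v [H2 H3]]. eauto 6.
    intros [v [[H1 [u [Hu H2]]] H3]]. split; auto. split; auto. exists u; split; auto. apply IHC; eauto.
Qed.

Lemma falsC_depth C : forall w v, falsC w C v -> 0 < depth C -> R w v.
Proof.
  induction C; simpl; intros w v H Hd. lia.
  destruct H as [_ [u [Hu H]]]. destruct C; simpl in H.
  - destruct H as [_ ->]; auto.
  - eapply R_trans; eauto. apply IHC; simpl; auto. lia.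
Qed.

Lemma lob w A : (exists u, R w u /\ ~ forces u A) ->
  exists u, R w u /\ ~ forces u A /\ forall u', R u u' -> forces u' A.
Proof.
  intros [u [Hu Hn]]. revert Hu Hn. pattern u. apply (well_founded_ind R_wf). clear u.
  intros u IH Hu Hn. destruct (classic (forall u', R u u' -> forces u' A)) as [H|H].
  - exists u; auto.
  - apply not_all_ex_not in H. destruct H as [u' H]. apply imply_to_and in H. destruct H as [H1 H2].
    apply (IH u'); auto. eapply R_trans; eauto.
Qed.

Theorem soundness S : provable S -> forall w, ~ falsS w S.
Proof.
  induction 1; intros w Hf.
  - apply (IHprovable w). apply seq_eq_fals_all with G'; auto.
  - apply falsS_fill in Hf. destruct Hf as [v [_ Hv]]. simpl in Hv. tauto.
  - apply falsS_fill in Hf. destruct Hf as [v [Hc Hv]]. simpl in Hv.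
    destruct (classic (forces v A)).
    + apply (IHprovable2 w). apply falsS_fill. exists v; split; auto. simpl. split; auto. tauto.
    + apply (IHprovable1 w). apply falsS_fill. exists v; split; auto. simpl. tauto.
  - apply falsS_fill in Hf. destruct Hf as [v [Hc Hv]]. simpl in Hv.
    apply (IHprovable w). apply falsS_fill. exists v; split; auto. simpl. tauto.
  - apply falsS_fill in Hf. destruct Hf as [v [Hc Hv]]. simpl in Hv.
    destruct Hv as [Hv _].
    assert (Hex : exists u, R v u /\ ~ forces u A).
    { apply NNPP; intros Hn; apply Hv; intros u Hu; apply NNPP; intros Hu'; apply Hn; eauto. }
    apply lob in Hex. destruct Hex as [u [Hu [Hn Hall]]].
    apply (IHprovable w). apply falsS_fill. exists v; split; auto. simpl. split; auto.
    exists u; split; auto. simpl. split; [|split; auto].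
    intros [u' [Hu' Hf]]. apply forces_neg in Hf. apply Hf; auto.
  - apply falsS_fill in Hf. destruct Hf as [v [Hc Hv]].
    apply falsS_app in Hv. destruct Hv as [Hv1 Hv2]. simpl in Hv2. destruct Hv2 as [Hd _].
    apply falsS_fill in Hv1. destruct Hv1 as [u [Hu _]].
    apply (IHprovable w). apply falsS_fill. exists v; split; auto.
    apply falsS_app. split. apply falsS_fill. exists u; split; auto. simpl. split; auto.
    intros Hf. apply Hd. exists u. split; auto. eapply falsC_depth; eauto.
    simpl; auto.
Qed.

Definition form_eq_dec : forall x y : form, {x = y} + {x <> y}.
Proof. decide equality; apply PeanoNat.Nat.eq_dec. Defined.

Lemma filter_len_le {X} (f f' : X -> bool) l :
  (forall x, In x l -> f' x = true -> f x = true) -> length (filter f' l) <= length (filter f l).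
Proof.
  induction l; simpl; intros H; auto.
  destruct (f' a) eqn:E1.
  - rewrite (H a (or_introl eq_refl) E1). simpl. apply le_n_S. apply IHl; auto.
  - destruct (f a); simpl; [apply le_S|]; apply IHl; auto.
Qed.

Lemma filter_len_lt {X} (f f' : X -> bool) l x0 :
  (forall x, In x l -> f' x = true -> f x = true) -> In x0 l -> f x0 = true -> f' x0 = false ->
  length (filter f' l) < length (filter f l).
Proof.
  induction l; simpl; intros H Hin H1 H2. contradiction.
  destruct Hin as [->|Hin].
  - rewrite H1, H2. simpl. apply le_n_S. apply filter_len_le; auto.
  - destruct (f' a) eqn:E1.
    + rewrite (H a (or_introl eq_refl) E1). simpl. apply le_n_S. apply IHl; auto.
    + destruct (f a); simpl; [apply le_S|]; apply IHl; auto.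
Qed.

Fixpoint diasL (l : sequent) : list form :=
  match l with
  | [] => []
  | IF (Dia B) :: t => B :: diasL t
  | _ :: t => diasL t
  end.

Lemma In_diasL B l : In B (diasL l) <-> In (IF (Dia B)) l.
Proof.
  induction l as [|x l IH]; simpl. tauto.
  destruct x as [f|V]; [destruct f|]; simpl; rewrite IH; split; intros H;
    repeat match goal with H : _ \/ _ |- _ => destruct H end; auto; try discriminate; try (left; congruence).
Qed.

Inductive InF (F : form) : sequent -> Prop :=
| inf_here l : InF F (IF F :: l)
| inf_box V l : InF F V -> InF F (IB V :: l)
| inf_tl x l : InF F l -> InF F (x :: l).

Lemma InF_In F l : In (IF F) l -> InF F l.
Proof. induction l; simpl; intros H; [destruct H|]. destruct H as [H|H]. subst; constructor. constructor; auto. Qed.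

Lemma InF_box F V l : In (IB V) l -> InF F V -> InF F l.
Proof. induction l; simpl; intros H H'; [destruct H|]. destruct H as [H|H]. subst; constructor; auto. constructor; auto. Qed.

Lemma two_in {X} (x y : X) l : In x l -> In y l -> x <> y -> exists r, Permutation l (x :: y :: r).
Proof.
  intros Hx Hy Hne. apply in_split in Hx. destruct Hx as [l1 [l2 ->]].
  assert (Hy' : In y (l1 ++ l2)). { apply in_app_or in Hy. apply in_or_app. simpl in Hy. destruct Hy as [H|[H|H]]; auto. congruence. }
  apply in_split in Hy'. destruct Hy' as [l3 [l4 E]]. exists (l3 ++ l4).
  eapply perm_trans. apply Permutation_sym, Permutation_middle. apply perm_skip. rewrite E.
  apply Permutation_sym, Permutation_middle.
Qed.

Lemma F2_in_l {A B} (P : A -> B -> Prop) l1 l2 x : Forall2 P l1 l2 -> In x l1 -> exists y, In y l2 /\ P x y.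
Proof. induction 1; simpl; intros H1; [destruct H1|]. destruct H1 as [H1|H1]; subst; eauto. destruct (IHForall2 H1) as [y0 [? ?]]; eauto. Qed.

Lemma F2_in_r {A B} (P : A -> B -> Prop) l1 l2 y : Forall2 P l1 l2 -> In y l2 -> exists x, In x l1 /\ P x y.
Proof. induction 1; simpl; intros H1; [destruct H1|]. destruct H1 as [H1|H1]; subst; eauto. destruct (IHForall2 H1) as [x' [? ?]]; eauto. Qed.

Fixpoint fsize (A : form) : nat :=
  match A with
  | Atom _ | NAtom _ => 1
  | And A B | Or A B => S (fsize A + fsize B)
  | Box A | Dia A => S (fsize A)
  end.

Fixpoint wgt (l : sequent) : nat :=
  match l with
  | [] => 0
  | IF F :: t => fsize F + wgt t
  | IB _ :: t => S (wgt t)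
  end.

Section Compl.
Variable Cl : list form.
Hypothesis cAnd : forall A B, In (And A B) Cl -> In A Cl /\ In B Cl.
Hypothesis cOr : forall A B, In (Or A B) Cl -> In A Cl /\ In B Cl.
Hypothesis cBox : forall A, In (Box A) Cl -> In A Cl /\ In (Dia (neg A)) Cl.
Hypothesis cDia : forall A, In (Dia A) Cl -> In A Cl.

Definition boxbody (A : form) : list form := match A with Box B => [B] | _ => [] end.
Definition BL := flat_map boxbody Cl.
Definition mm (L : list form) : nat :=
  length (filter (fun A => if in_dec form_eq_dec (neg A) L then false else true) BL).

Lemma mm_anti L L' : (forall x, In x L -> In x L') -> mm L' <= mm L.
Proof.
  intros H. apply filter_len_le. intros x _.
  destruct (in_dec form_eq_dec (neg x) L'); destruct (in_dec form_eq_dec (neg x) L); auto.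
  all: try (exfalso; auto; fail).
Qed.

Lemma mm_strict L L' A : (forall x, In x L -> In x L') -> In (Box A) Cl -> ~ In (neg A) L -> In (neg A) L' -> mm L' < mm L.
Proof.
  intros H HA H1 H2. apply filter_len_lt with A.
  - intros x _. destruct (in_dec form_eq_dec (neg x) L'); destruct (in_dec form_eq_dec (neg x) L); auto.
    all: try (exfalso; auto; fail).
  - unfold BL. apply in_flat_map. exists (Box A); simpl; auto.
  - destruct (in_dec form_eq_dec (neg A) L); tauto.
  - destruct (in_dec form_eq_dec (neg A) L'); tauto.
Qed.

Definition AllCl (U : sequent) := forall F, InF F U -> In F Cl.

Definition newbox (A : form) : item := IB [IF (Dia (neg A)); IF A].

Definition doneOK (U : sequent) (x : item) : Prop :=
  (exists a, x = IF (Atom a)) \/ (exists a, x = IF (NAtom a)) \/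
  (exists B, x = IF (Dia B) /\ In (Dia B) Cl) \/ (exists V, x = IB V /\ In (IB V) U) \/
  (exists A, x = newbox A /\ In (Box A) Cl).

Definition todoOK (U : sequent) (x : item) : Prop :=
  (exists F, x = IF F /\ In F Cl) \/ (exists V, x = IB V /\ In (IB V) U).

Lemma local S U : forall n todo D, wgt todo <= n -> Forall (todoOK U) todo -> Forall (doneOK U) D ->
  ~ provable (fill S (D ++ todo)) ->
  exists D', Forall (doneOK U) D' /\ ~ provable (fill S D') /\
    (forall w, falsS w D' -> falsS w (D ++ todo)) /\
    (forall B, In (IF (Dia B)) (D ++ todo) -> In (IF (Dia B)) D').
Proof.
  induction n; intros todo D Hw Ht Hd Hu.
  - destruct todo as [|x todo].
    + exists D; rewrite app_nil_r in *; auto.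
    + destruct x as [f|V]; simpl in Hw; [destruct f; simpl in Hw|]; lia.
  - destruct todo as [|x todo].
    + exists D; rewrite app_nil_r in *; auto.
    + inversion Ht as [|? ? Hx Ht']; subst.
      assert (Move : doneOK U x -> wgt todo <= n -> exists D', Forall (doneOK U) D' /\ ~ provable (fill S D') /\
           (forall w, falsS w D' -> falsS w (D ++ x :: todo)) /\
           (forall B, In (IF (Dia B)) (D ++ x :: todo) -> In (IF (Dia B)) D')).
      { intros Hdx Hwn. destruct (IHn todo (D ++ [x])) as [D' [H1 [H2 [H3 H4]]]]; auto.
        apply Forall_app; auto. rewrite <- app_assoc; auto.
        exists D'; repeat split; auto.
        intros w Hf; rewrite <- (app_assoc D [x] todo) in H3; simpl in H3; auto.
        intros B HB; apply H4; rewrite <- app_assoc; auto. }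
      destruct Hx as [[F [-> HF]]|[V [-> HV]]].
      * destruct F as [a|a|A B|A B|A|A]; simpl in Hw.
        -- apply Move. left; eauto. lia.
        -- apply Move. right; left; eauto. lia.
        -- destruct (cAnd _ _ HF) as [HA HB].
           destruct (classic (provable (fill S (D ++ IF A :: todo)))) as [PA|PA].
           ++ destruct (classic (provable (fill S (D ++ IF B :: todo)))) as [PB|PB].
              ** exfalso. apply Hu. apply prov_perm with (X := IF (And A B) :: D ++ todo). psolve.
                 apply r_and; [eapply prov_perm; [|exact PA] | eapply prov_perm; [|exact PB]]; psolve.
              ** destruct (IHn (IF B :: todo) D) as [D' [H1 [H2 [H3 H4]]]]; auto. simpl; lia.
                 constructor; auto. left; eauto.
                 exists D'; repeat split; auto.
                 intros w Hf. specialize (H3 w Hf). rewrite falsS_app in *. simpl in *. tauto.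
                 intros C HC. apply H4. apply in_app_or in HC; apply in_or_app; simpl in *. destruct HC as [HC|[HC|HC]]; auto. discriminate.
           ++ destruct (IHn (IF A :: todo) D) as [D' [H1 [H2 [H3 H4]]]]; auto. simpl; lia.
              constructor; auto. left; eauto.
              exists D'; repeat split; auto.
              intros w Hf. specialize (H3 w Hf). rewrite falsS_app in *. simpl in *. tauto.
              intros C HC. apply H4. apply in_app_or in HC; apply in_or_app; simpl in *. destruct HC as [HC|[HC|HC]]; auto. discriminate.
        -- destruct (cOr _ _ HF) as [HA HB].
           destruct (IHn (IF A :: IF B :: todo) D) as [D' [H1 [H2 [H3 H4]]]]; auto. simpl; lia.
           constructor; [left; eauto|constructor; [left; eauto|auto]].
           intros P. apply Hu. apply prov_perm with (X := IF (Or A B) :: D ++ todo). psolve.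
           apply r_or; eapply prov_perm; [|exact P]; psolve.
           exists D'; repeat split; auto.
           intros w Hf. specialize (H3 w Hf). rewrite falsS_app in *. simpl in *. tauto.
           intros C HC. apply H4. apply in_app_or in HC; apply in_or_app; simpl in *. destruct HC as [HC|[HC|HC]]; auto. discriminate.
        -- destruct (IHn todo (D ++ [newbox A])) as [D' [H1 [H2 [H3 H4]]]]; auto. lia.
           apply Forall_app; split; auto. constructor; auto. right; right; right; right; eauto.
           intros P. apply Hu. apply prov_perm with (X := IF (Box A) :: D ++ todo). psolve.
           apply r_box. eapply prov_perm; [|exact P]. unfold newbox; psolve.
           exists D'; repeat split; auto.
           intros w Hf. specialize (H3 w Hf). rewrite <- app_assoc in H3. rewrite falsS_app in *. simpl in *.
           destruct H3 as [H3 [[v [Hv [_ [Hfv _]]]] H5]]. split; [auto|split; [|auto]]. intros Hb. apply Hfv. apply Hb; auto.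

           intros C HC. apply H4. rewrite <- app_assoc. apply in_app_or in HC; apply in_or_app; simpl in *. destruct HC as [HC|[HC|HC]]; auto. discriminate.
        -- apply Move. right; right; left; eauto. lia.
      * apply Move. right; right; right; left; eauto. simpl in Hw; lia.
Qed.


Definition mu (Dset : list form) (U : sequent) := mm (Dset ++ diasL U).

Definition relT (Dset' : list form) (x y : item) : Prop :=
  (exists f, x = IF f /\ y = IF f) \/
  (exists V T, x = IB V /\ y = IB T /\ falsS T V /\ (forall A, In A Dset' -> forall T', RT T T' -> ~ forces T' A)).

Lemma F2_IF Dset' l1 l2 f : Forall2 (relT Dset') l1 l2 -> In (IF f) l1 -> In (IF f) l2.
Proof.
  intros H Hin. destruct (F2_in_l _ _ _ _ H Hin) as [y [Hy [[g [E1 E2]]|[V [T [E1 _]]]]]]; try discriminate.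
  inversion E1; subst; auto.
Qed.

Theorem proc : forall n s Dset S U, mu Dset U <= n -> ssize U <= s ->
  (forall A, In A Dset -> DA S A) -> (forall A, In A Dset -> In A Cl) -> AllCl U ->
  ~ provable (fill S U) ->
  exists T, ~ provable (fill S T) /\ falsS T U /\ (forall A, In A Dset -> forall T', RT T T' -> ~ forces T' A).
Proof.
  intros n. induction n as [n IHn] using (well_founded_induction Wf_nat.lt_wf).
  intros s. induction s as [s IHs] using (well_founded_induction Wf_nat.lt_wf).
  intros Dset S U Hmu Hs HDA HDcl HU Hu.
  destruct (local S U (wgt (map IF Dset ++ U)) (map IF Dset ++ U) [] (le_n _)) as [D [HD1 [HD2 [HD3 HD4]]]].
  { apply Forall_forall. intros x Hx. apply in_app_or in Hx. destruct Hx as [Hx|Hx].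
    - apply in_map_iff in Hx. destruct Hx as [A [<- HA]]. left; eauto.
    - destruct x as [F|V]. left; exists F; split; auto. apply HU, InF_In; auto. right; eauto. }
  { constructor. }
  { simpl. intros P. apply Hu. eapply DA_addl; eauto. }
  set (Dset' := Dset ++ diasL D).
  assert (HdiasU : forall B, In B (diasL U) -> In B (diasL D)).
  { intros B HB. apply In_diasL. apply HD4. simpl. apply in_or_app; right. apply In_diasL; auto. }
  assert (HD'cl : forall A, In A Dset' -> In A Cl).
  { intros A HA. apply in_app_or in HA. destruct HA as [HA|HA]; auto.
    apply In_diasL in HA. rewrite Forall_forall in HD1. specialize (HD1 _ HA).
    destruct HD1 as [[a E]|[[a E]|[[B [E HB]]|[[V [E _]]|[A' [E _]]]]]]; try discriminate.
    inversion E; subst. apply cDia; auto. }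
  assert (Loop : forall Rest Dpre Done, D = Dpre ++ Rest -> Forall2 (relT Dset') Dpre Done ->
            ~ provable (fill S (Done ++ Rest)) ->
            exists Done', Forall2 (relT Dset') D Done' /\ ~ provable (fill S Done')).
  { induction Rest as [|x Rest IHR]; intros Dpre Done ED HF2 Hun.
    - exists Done. rewrite app_nil_r in *. subst; auto.
    - assert (Hx : doneOK U x). { rewrite Forall_forall in HD1; apply HD1. rewrite ED. apply in_or_app; simpl; auto. }
      assert (IFcase : forall f, x = IF f -> exists Done', Forall2 (relT Dset') D Done' /\ ~ provable (fill S Done')).
      { intros f ->. apply (IHR (Dpre ++ [IF f]) (Done ++ [IF f])).
        rewrite <- app_assoc; auto. apply Forall2_app; auto. constructor; [left; eauto|constructor].
        rewrite <- app_assoc; auto. }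
      set (SV := comp S (Nest (Done ++ Rest) (Hole []))).
      assert (ESV : forall W, fill SV W = fill S ((Done ++ Rest) ++ [IB W])).
      { intros W; unfold SV; rewrite fill_comp; reflexivity. }
      assert (HDAg : (exists V, x = IB V) -> forall A, In A Dset' -> DA SV A).
      { intros [V0 EV] A HA. apply in_app_or in HA. destruct HA as [HA|HA].
        - apply DA_ext; auto.
        - apply DA_here. apply In_diasL in HA. rewrite ED in HA. apply in_app_or in HA. apply in_or_app.
          destruct HA as [HA|[HA|HA]]; [left; eapply F2_IF; eauto| congruence | right; auto]. }
      assert (IBcase : forall V, x = IB V -> (mu Dset' V < n \/ (mu Dset' V <= n /\ ssize V < s)) -> AllCl V ->
                exists Done', Forall2 (relT Dset') D Done' /\ ~ provable (fill S Done')).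
      { intros V -> Hm HV.
        assert (HDA' := HDAg (ex_intro _ V eq_refl)).
        assert (HunV : ~ provable (fill SV V)).
        { intros P. apply Hun. rewrite ESV in P. eapply prov_perm; [|exact P]. psolve. }
        assert (Res : exists T, ~ provable (fill SV T) /\ falsS T V /\ (forall A, In A Dset' -> forall T', RT T T' -> ~ forces T' A)).
        { destruct Hm as [Hm|[Hm Hsz]].
          - apply (IHn (mu Dset' V) Hm (ssize V) Dset' SV V); auto.
          - apply (IHs (ssize V) Hsz Dset' SV V); auto. }
        destruct Res as [T [HT1 [HT2 HT3]]].
        apply (IHR (Dpre ++ [IB V]) (Done ++ [IB T])).
        rewrite <- app_assoc; auto. apply Forall2_app; auto. constructor; [right; exists V, T; auto|constructor].
        intros P. apply HT1. rewrite ESV. eapply prov_perm; [|exact P]. psolve. }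
      destruct Hx as [[a E]|[[a E]|[[B [E HB]]|[[V [E HV]]|[A [E HA]]]]]].
      + eapply IFcase; eauto.
      + eapply IFcase; eauto.
      + eapply IFcase; eauto.
      + apply (IBcase V E).
        * right. split.
          -- eapply PeanoNat.Nat.le_trans; [|exact Hmu]. unfold mu. apply mm_anti.
             intros y Hy. apply in_app_or in Hy. unfold Dset'. rewrite <- app_assoc. apply in_or_app.
             destruct Hy as [Hy|Hy]; auto. right. apply in_or_app. left. auto.
          -- eapply PeanoNat.Nat.lt_le_trans; [|exact Hs]. apply child_size. exact HV.
        * intros F HF. apply HU. eapply InF_box; eauto.
      + apply (IBcase _ E).
        * left. eapply PeanoNat.Nat.lt_le_trans; [|exact Hmu]. unfold mu.
          eapply PeanoNat.Nat.lt_le_trans. apply mm_strict with (L := Dset') (A := A).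
          -- intros y Hy; apply in_or_app; auto.
          -- auto.
          -- intros Hin. assert (HDn : DA SV (neg A)) by (apply HDAg; eauto).
             apply Hun. subst x.
             assert (P := blocked_prov SV A [] HDn). rewrite ESV in P.
             eapply prov_perm; [|exact P]. unfold newbox. psolve.
          -- apply in_or_app. right. simpl. auto.
          -- apply mm_anti. intros y Hy. apply in_app_or in Hy. unfold Dset'. apply in_or_app.
             destruct Hy as [Hy|Hy]; auto.
        * intros F HF. destruct (cBox _ HA) as [H1 H2].
          inversion HF; subst; auto. inversion H0; subst; auto. inversion H3; subst; inversion H4. }
  destruct (Loop D [] [] (eq_refl _) (Forall2_nil _)) as [T [HT1 HT2]]. simpl; auto.
  exists T.
  assert (HfD : falsS T D).
  { apply falsS_In. intros x Hx.
    destruct (F2_in_l _ _ _ _ HT1 Hx) as [y [Hy [[f [-> ->]]|[V [T0 [-> [-> [HT0a HT0b]]]]]]]].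
    - rewrite Forall_forall in HD1. specialize (HD1 _ Hx).
      destruct HD1 as [[a E]|[[a E]|[[B [E HB]]|[[V [E _]]|[A' [E _]]]]]]; try discriminate; inversion E; subst f; simpl.
      + intros Hin. apply HT2. destruct (two_in _ _ _ Hin Hy) as [r Hr]. discriminate.
        eapply prov_perm; [apply Permutation_sym; exact Hr|]. apply r_id.
      + tauto.
      + intros [T' [HR HB']]. destruct (R_first _ _ HR) as [T1 [Hc HRT]].
        destruct (F2_in_r _ _ _ _ HT1 Hc) as [x' [Hx' [[g [_ E']]|[V [T0 [_ [E' [_ HT0]]]]]]]]; try discriminate.
        inversion E'; subst T0. apply (HT0 B) with T'; auto. apply in_or_app; right. apply In_diasL; auto.
    - exists T0. split; auto. apply R_child. exact Hy. }
  assert (HfU0 := HD3 T HfD). simpl in HfU0. apply falsS_app in HfU0. destruct HfU0 as [HfDs HfU].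
  assert (HDsT : forall A, In A Dset -> ~ forces T A).
  { intros A HA. rewrite falsS_In in HfDs. apply (HfDs (IF A)). apply in_map; auto. }
  repeat split; auto.
  intros A HA T' HRT. destruct (RT_cases _ _ HRT) as [<-|HR]; auto.
  destruct (R_first _ _ HR) as [T1 [Hc HRT1]].
  destruct (F2_in_r _ _ _ _ HT1 Hc) as [x' [Hx' [[g [_ E']]|[V [T0 [_ [E' [_ HT0]]]]]]]]; try discriminate.
  inversion E'; subst T0. apply (HT0 A); auto. apply in_or_app; auto.
Qed.

End Compl.

Fixpoint iforms (i : item) : list form :=
  match i with
  | IF A => [A]
  | IB l => (fix lf (l : list item) : list form := match l with [] => [] | j :: l' => iforms j ++ lf l' end) l
  end.
Definition sforms : list item -> list form :=
  fix lf (l : list item) : list form := match l with [] => [] | j :: l' => iforms j ++ lf l' end.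

Lemma InF_sforms F l : InF F l -> In F (sforms l).
Proof.
  induction 1; simpl.
  - auto.
  - apply in_or_app; left. exact IHInF.
  - apply in_or_app; right; auto.
Qed.

Fixpoint subs (A : form) : list form :=
  A :: match A with
       | And B C | Or B C => subs B ++ subs C
       | Box B | Dia B => subs B
       | _ => []
       end.

Lemma subs_trans A : forall B C, In B (subs A) -> In C (subs B) -> In C (subs A).
Proof.
  induction A; simpl; intros B C HB HC; destruct HB as [<-|HB]; simpl in HC; auto;
  try (destruct HB).
  all: try (apply in_app_or in HB; destruct HB as [HB|HB]; right; apply in_or_app; eauto).
  all: right; eauto.
Qed.

Section Main.
Variable S : sequent.
Definition P0 X := exists G, In G (sforms S) /\ In X (subs G).
Definition Cl0 := flat_map subs (sforms S).
Definition Cl := Cl0 ++ map neg Cl0.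

Lemma Cl0_iff X : In X Cl0 <-> P0 X.
Proof. unfold Cl0, P0. rewrite in_flat_map. tauto. Qed.

Lemma Cl_iff X : In X Cl <-> P0 X \/ exists Y, X = neg Y /\ P0 Y.
Proof.
  unfold Cl. rewrite in_app_iff, Cl0_iff, in_map_iff. split; intros [H|[Y [E H]]]; auto.
  right; exists Y; split; auto; apply Cl0_iff; auto.
  right; exists Y; split; auto; apply Cl0_iff; auto.
Qed.

Lemma P0_sub X Y : P0 X -> In Y (subs X) -> P0 Y.
Proof. intros [G [HG HX]] HY. exists G; split; auto. eapply subs_trans; eauto. Qed.

Lemma subs_self A : In A (subs A).
Proof. destruct A; simpl; auto. Qed.
Ltac sub_tac := simpl; right; first [apply subs_self | apply in_or_app; left; apply subs_self | apply in_or_app; right; apply subs_self].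

Lemma cAnd' : forall A B, In (And A B) Cl -> In A Cl /\ In B Cl.
Proof.
  intros A B H. rewrite Cl_iff in H. rewrite !Cl_iff. destruct H as [H|[Y [E H]]].
  - split; left; apply (P0_sub _ _ H); sub_tac.
  - destruct Y; simpl in E; try discriminate. inversion E; subst.
    split; right; eexists; (split; [reflexivity| apply (P0_sub _ _ H); sub_tac]).
Qed.

Lemma cOr' : forall A B, In (Or A B) Cl -> In A Cl /\ In B Cl.
Proof.
  intros A B H. rewrite Cl_iff in H. rewrite !Cl_iff. destruct H as [H|[Y [E H]]].
  - split; left; apply (P0_sub _ _ H); sub_tac.
  - destruct Y; simpl in E; try discriminate. inversion E; subst.
    split; right; eexists; (split; [reflexivity| apply (P0_sub _ _ H); sub_tac]).
Qed.

Lemma cBox' : forall A, In (Box A) Cl -> In A Cl /\ In (Dia (neg A)) Cl.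
Proof.
  intros A H. rewrite Cl_iff in H. rewrite !Cl_iff. destruct H as [H|[Y [E H]]].
  - split. left; apply (P0_sub _ _ H); sub_tac. right. exists (Box A); auto.
  - destruct Y; simpl in E; try discriminate. inversion E; subst.
    split. right; eexists; (split; [reflexivity| apply (P0_sub _ _ H); sub_tac]).
    left. rewrite neg_inv. auto.
Qed.

Lemma cDia' : forall A, In (Dia A) Cl -> In A Cl.
Proof.
  intros A H. rewrite Cl_iff in H. rewrite !Cl_iff. destruct H as [H|[Y [E H]]].
  - left; apply (P0_sub _ _ H); sub_tac.
  - destruct Y; simpl in E; try discriminate. inversion E; subst.
    right; eexists; (split; [reflexivity| apply (P0_sub _ _ H); sub_tac]).
Qed.

Theorem completeness : ~ provable S -> exists T, falsS T S.
Proof.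
  intros Hn.
  destruct (proc Cl cAnd' cOr' cBox' cDia' (mu Cl [] S) (ssize S) [] (Hole []) S (le_n _) (le_n _))
    as [T [_ [HT _]]]; simpl; auto; try tauto.
  intros F HF. apply Cl_iff. left. apply Cl0_iff. unfold Cl0. apply in_flat_map.
  exists F; split. apply InF_sforms; auto. destruct F; simpl; auto.
  eauto.
Qed.
End Main.

Theorem mainTheorem11 (G : ctx) (A : form) :
  provable (fill G [IF A]) -> provable (fill G [IF (neg A)]) ->
  provable (fill G []).
Proof.
  intros H1 H2. apply NNPP; intros Hn.
  destruct (completeness _ Hn) as [T HT].
  apply falsS_fill in HT. destruct HT as [v [Hc _]].
  destruct (classic (forces v A)) as [Hf|Hf].
  - apply (soundness _ H2 T). apply falsS_fill. exists v; split; auto. simpl. split; auto.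
    rewrite forces_neg. tauto.
  - apply (soundness _ H1 T). apply falsS_fill. exists v; split; auto. simpl. split; auto.
Qed.
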